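(* Let $y\ge 1$ and $m\ge 2$ be integers. Consider the random walk $(X_t)_{t\ge 0}$ on $\mathbb{Z}$ with $X_0=m-1$ whose steps are independent and equal to $+y$ or $-1$, each with probability $\tfrac12$, stopped at the first time $\tau$ at which $X_\tau\in\{0\}\cup\{m,m+1,\dots,m+y-1\}$. For $j\ge 0$ let $\rho_j$ be the probability that $\tau<\infty$, $X_\tau\in\{m,\dots,m+y-1\}$, and exactly $j$ of the first $\tau$ steps are $-1$ steps, and set $$p_r(z)=\sum_{j\ge 0}\rho_j\, z^{j+1}.$$ For an integer $k$ define $$u[y,k](z)=\sum_{\substack{n\ge 0\\ (y+1)n-k<0}}\frac{z^{yn}}{2^{(y+1)n+1-k}}\binom{(y+1)n-k}{n}.$$ Then, as formal power series in $z$, $$p_r(z)=\frac{z\,u[y,m-1](z)+z^{2}\,u[y,m-2](z)+\cdots+z^{y}\,u[y,m-y](z)}{u[y,m](z)}.$$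
   Context: For an integer $a$ (possibly negative) and $n\ge 0$, $\binom{a}{n}=a(a-1)\cdots(a-n+1)/n!$. The sum defining $u[y,k]$ is finite, and is the empty sum $0$ when $k\le 0$. Before absorption the walk stays in $\{1,\dots,m-1\}$, so it cannot jump over the right absorbing set $\{m,\dots,m+y-1\}$. $p_r$ is the generating function for absorption at one of the right-hand barriers $m,\dots,m+y-1$, with $z$ marking backward steps and an extra overall factor $z$. *)

(* Defs.v *)
From mathcomp Require Import all_boot all_order all_algebra.
From mathcomp Require Import zify.
Set Implicit Arguments. Unset Strict Implicit. Unset Printing Implicit Defensive.
Import Order.TTheory GRing.Theory Num.Theory.
Local Open Scope ring_scope.

Definition gbinom (a : int) (n : nat) : rat :=
  (\prod_(i < n) (a - i%:Z)%:~R) / (n`!)%:R.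

(* The condition (y+1)n - k < 0 forces n < k <= |k|, so summing over n < |k|
   loses no term. *)
Definition u (y : nat) (k : int) : {poly rat} :=
  \sum_(n < absz k | ((y.+1 * n)%:Z - k < 0))
     ((gbinom ((y.+1 * n)%:Z - k) n / (2%:R : rat) ^ ((y.+1 * n)%:Z + 1 - k))
        *: 'X^(y * n)).

(* Walk paths: a finite sequence of steps, true = +y step, false = -1 step. *)
Definition pos (y m : nat) (s : seq bool) : int :=
  (m%:Z - 1) + (y * count id s)%:Z - (count negb s)%:Z.

(* s is exactly the sequence of the first tau steps of a walk absorbed on the
   right: every proper prefix keeps the walk in {1,...,m-1} (not yet absorbed)
   and the full sequence ends in {m,...,m+y-1}. *)
Definition right_absorbed (y m : nat) (s : seq bool) : bool :=
  all (fun i => (1 <= pos y m (take i s)) && (pos y m (take i s) <= m%:Z - 1))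
      (iota 0 (size s))
  && (m%:Z <= pos y m s) && (pos y m s <= m%:Z + y%:Z - 1).

Lemma right_absorbed_size (y m : nat) (s : seq bool) :
  (1 <= y)%N -> right_absorbed y m s -> (size s < 2 * count negb s + 2)%N.
Proof.
move=> y1 /andP[/andP[_ _] hi].
have hs := count_predC id s.
move: hi; rewrite /pos => hi.
have : ((y * count id s)%:Z <= y%:Z + (count negb s)%:Z)%R.
  by move: hi; set a := (y * _)%:Z; set b := (count negb s)%:Z; lia.
move=> h.
have h' : (y * count id s <= y + count negb s)%N by lia.
have hpred : count (predC id) s = count negb s by [].
nia.
Qed.

(* By [right_absorbed_size] only lengths L < 2j+2 occur. *)
Definition rho (y m j : nat) : rat :=
  \sum_(L < (2 * j + 2)%N)
    \sum_(t : L.-tuple bool | right_absorbed y m t && (count negb t == j))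
      ((2%:R : rat) ^- L).

Definition pr_coef (y m N : nat) : rat :=
  if N is j.+1 then rho y m j else 0.

Definition pr_num (y m : nat) : {poly rat} :=
  \sum_(i < y) 'X^(i.+1) * u y (m%:Z - (i.+1)%:Z).

(* Main.v *)
Require Import Defs.
From mathcomp Require Import all_boot all_order all_algebra.
From mathcomp Require Import zify ring lra.
Set Implicit Arguments. Unset Strict Implicit. Unset Printing Implicit Defensive.
Import Order.TTheory GRing.Theory Num.Theory.
Local Open Scope ring_scope.

Lemma gbinom0 a : gbinom a 0 = 1.
Proof. by rewrite /gbinom big_ord0 fact0 divr1. Qed.

Lemma gbinomSr a n : gbinom a n.+1 = gbinom a n * (a - n%:Z)%:~R / n.+1%:R.
Proof.
rewrite /gbinom big_ord_recr /= factS natrM.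
have h1 : (n.+1%:R : rat) != 0 by rewrite pnatr_eq0.
have h2 : ((n`!)%:R : rat) != 0 by rewrite pnatr_eq0 -lt0n fact_gt0.
field; by rewrite nat1r h1 h2.
Qed.

Lemma gbinomSl a n : gbinom (a + 1) n.+1 = (a + 1)%:~R * gbinom a n / n.+1%:R.
Proof.
rewrite /gbinom big_ord_recl /= factS natrM subr0.
have h1 : (n.+1%:R : rat) != 0 by rewrite pnatr_eq0.
have h2 : ((n`!)%:R : rat) != 0 by rewrite pnatr_eq0 -lt0n fact_gt0.
have -> : \prod_(i < n) ((a + 1 - (bump 0 i)%:Z)%:~R : rat) = \prod_(i < n) (a - i%:Z)%:~R.
  apply: eq_bigr => i _; congr (_%:~R); rewrite /bump /= add1n -addn1 PoszD; ring.
field; by rewrite nat1r h1 h2.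
Qed.

Lemma gbinom_pascal a n :
  gbinom a n.+1 + gbinom a n = gbinom (a + 1) n.+1.
Proof.
rewrite gbinomSr gbinomSl.
have h1 : (n.+1%:R : rat) != 0 by rewrite pnatr_eq0.
rewrite !intrD intrN -!pmulrn /= -[n.+1]addn1 natrD /=.
field. by rewrite natr1.
Qed.

Lemma term_id (a : int) (n : nat) :
  (if a < 0 then gbinom a n / (2%:R:rat) ^ (a + 1) else 0)
  - 2%:R * (if a + 1 < 0 then gbinom (a + 1) n / (2%:R:rat) ^ (a + 1 + 1) else 0)
  + (if n is n'.+1 then (if a < 0 then gbinom a n' / (2%:R:rat) ^ (a + 1) else 0) else 0)
  = ((a == -1) && (n == 0%N))%:R.
Proof.
have h2 : (2%:R : rat) != 0 by [].
have hp : (2%:R : rat) ^ (a + 1) != 0 by apply: expfz_neq0.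
have e : (2%:R:rat) ^ (a+1+1) = 2 ^ (a+1) * 2 by rewrite expfzDr // expr1z.
rewrite e.
case: (ltrP a (-1)) => ha.
- have -> : a < 0 by lia.
  have -> : a + 1 < 0 by lia.
  have -> : (a == -1) = false by lia.
  case: n => [|n].
  + rewrite !gbinom0 /=; field; by rewrite hp.
  + rewrite -gbinom_pascal /=; field; by rewrite hp.
- case: (ltrP a 0) => ha0.
  + have ea : a = -1 by lia.
    subst a. rewrite /= expr0z.
    case: n => [|n]; first by rewrite gbinom0 /= divr1 mulr0 subr0 addr0.
    rewrite /= !divr1 mulr0 subr0 gbinom_pascal gbinomSl /=.
    by rewrite !mul0r.
  + have -> : a + 1 < 0 = false by lia.
    have -> : (a == -1) = false by lia.
    by case: n => [|n]; rewrite /= ?subr0 ?mulr0 ?addr0.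
Qed.

Definition cc (y n : nat) (k : int) : rat :=
  if (y.+1 * n)%:Z - k < 0 then
    gbinom ((y.+1 * n)%:Z - k) n / (2%:R : rat) ^ ((y.+1 * n)%:Z + 1 - k) else 0.

Definition U (y : nat) (k : int) (B : nat) : {poly rat} :=
  \sum_(n < B) cc y n k *: 'X^(y * n).

Lemma cc_a y n k : cc y n k =
  if (y.+1 * n)%:Z - k < 0 then
    gbinom ((y.+1 * n)%:Z - k) n / (2%:R : rat) ^ ((y.+1 * n)%:Z - k + 1) else 0.
Proof. by rewrite /cc; have -> : (y.+1 * n)%:Z + 1 - k = (y.+1 * n)%:Z - k + 1 by ring. Qed.

Lemma u_U y k B : (`|k| <= B)%N -> u y k = U y k B.
Proof.
move=> hB.
rewrite /u /U big_mkcond /=.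
have -> : \sum_(i < `|k|) (if (y.+1 * i)%:Z - k < 0
    then (gbinom ((y.+1 * i)%:Z - k) i / 2%:R ^ ((y.+1 * i)%:Z + 1 - k)) *: 'X^(y * i)
    else 0) = \sum_(i < `|k|) cc y i k *: 'X^(y * i).
  by apply: eq_bigr => i _; rewrite /cc; case: ifP => _; rewrite ?scale0r.
rewrite (big_ord_widen B (fun n : nat => cc y n k *: 'X^(y * n)) hB).
rewrite [RHS](bigID (fun i : 'I_B => (i < `|k|)%N)) /=.
rewrite [X in _ = _ + X]big1 ?addr0 //.
move=> i hi; rewrite /cc.
have -> : (y.+1 * i)%:Z - k < 0 = false.
  move: hi; rewrite -leqNgt => hi; lia.
by rewrite scale0r.
Qed.

Lemma cc_term y n k :
  cc y n k - 2%:R * cc y n (k - 1) + (if n is n'.+1 then cc y n' (k - y.+1%:Z) else 0)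
  = ((k == 1) && (n == 0%N))%:R.
Proof.
have e1 : forall n, (y.+1 * n)%:Z - (k - 1) = ((y.+1*n)%:Z - k) + 1 by move=> ?; ring.
case: n => [|n].
  have T := term_id ((y.+1 * 0)%:Z - k) 0.
  rewrite /= in T; rewrite !cc_a e1 T /= muln0 add0r.
  by have -> : (- k == -1) = (k == 1) by lia.
have T := term_id ((y.+1 * n.+1)%:Z - k) n.+1.
rewrite /= in T; rewrite !cc_a e1.
have -> : (y.+1 * n)%:Z - (k - y.+1%:Z) = (y.+1 * n.+1)%:Z - k by rewrite mulnS PoszD; ring.
by rewrite T !andbF.
Qed.

Lemma U_rec y k B :
  U y k B.+1 - 2%:R *: U y (k - 1) B.+1 + 'X^y * U y (k - y.+1%:Z) B = ((k == 1)%:R)%:P.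
Proof.
have -> : 'X^y * U y (k - y.+1%:Z) B =
   \sum_(n < B.+1) (if (n:nat) is n'.+1 then cc y n' (k - y.+1%:Z) else 0) *: 'X^(y * n).
  rewrite big_ord_recl /= scale0r add0r /U mulr_sumr.
  apply: eq_bigr => i _; rewrite -scalerAr -exprD /bump /= add1n mulnS.
  by [].
rewrite /U scaler_sumr -sumrB -big_split /=.
rewrite (eq_bigr (fun n : 'I_B.+1 => ((k == 1) && (n == 0%N :> nat))%:R *: 'X^(y * n))); last first.
  move=> i _; rewrite scalerA -scalerBl -scalerDl; congr (_ *: _).
  by rewrite -(cc_term y i k).
rewrite big_ord_recl /= big1 ?addr0; last by move=> i _; rewrite andbF scale0r.
by rewrite andbT muln0 expr0 alg_polyC.
Qed.

Lemma u_rec y k :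
  u y k - 2%:R *: u y (k - 1) + 'X^y * u y (k - y.+1%:Z) = ((k == 1)%:R)%:P.
Proof.
set B := (`|k| + y.+1)%N.
rewrite (@u_U y k B.+1) ?(@u_U y (k - 1) B.+1) ?(@u_U y (k - y.+1%:Z) B); try lia.
exact: U_rec.
Qed.

Lemma u_le0 y k : k <= 0 -> u y k = 0.
Proof.
move=> hk; rewrite /u big1 // => i hi.
move: hi; have -> : (y.+1 * i)%:Z - k < 0 = false by lia.
by [].
Qed.

Lemma u_1 y : u y 1 = 1.
Proof.
rewrite /u big_mkcond /= big_ord1 /= !muln0 gbinom0 /=.
by rewrite expr0z divr1 scale1r expr0.
Qed.

Lemma sum_tuple0 (F : seq bool -> rat) :
  \sum_(t : 0.-tuple bool) F t = F [::].
Proof.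
rewrite (eq_bigr (fun _ => F [::])); last first.
  by move=> t _; have -> : (t : seq bool) = [::] by apply/size0nil; rewrite size_tuple.
by rewrite sumr_const card_tuple card_bool expn0.
Qed.

Lemma sum_tupleS L (F : seq bool -> rat) :
  \sum_(t : L.+1.-tuple bool) F t =
  \sum_(b : bool) \sum_(t : L.-tuple bool) F (b :: t).
Proof.
rewrite pair_big /=.
rewrite (reindex (fun p : bool * L.-tuple bool => [tuple of p.1 :: p.2])) /=; last first.
  exists (fun t : L.+1.-tuple bool => (thead t, [tuple of behead t])).
  - by move=> [b t] _ /=; rewrite theadE; congr pair; apply: val_inj.
  - by move=> t _; rewrite [RHS]tuple_eta.
by [].
Qed.

Definition posx (y : nat) (x : int) (s : seq bool) : int :=
  x + (y * count id s)%:Z - (count negb s)%:Z.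

Definition rabs (y m : nat) (x : int) (s : seq bool) : bool :=
  all (fun i => (1 <= posx y x (take i s)) && (posx y x (take i s) <= m%:Z - 1))
      (iota 0 (size s))
  && (m%:Z <= posx y x s) && (posx y x s <= m%:Z + y%:Z - 1).

Lemma rabs_ra y m s : right_absorbed y m s = rabs y m (m%:Z - 1) s.
Proof. by []. Qed.

Definition stp (y : nat) (b : bool) : int := if b then y%:Z else -1.

Lemma posx_cons y x b s : posx y x (b :: s) = posx y (x + stp y b) s.
Proof. rewrite /posx /stp; case: b => /=; lia. Qed.

Lemma posx_nil y x : posx y x [::] = x.
Proof. rewrite /posx /=; lia. Qed.

Lemma rabs_nil y m x : rabs y m x [::] = (m%:Z <= x) && (x <= m%:Z + y%:Z - 1).
Proof. by rewrite /rabs /= posx_nil. Qed.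

Lemma rabs_cons y m x b s :
  rabs y m x (b :: s) = ((1 <= x) && (x <= m%:Z - 1)) && rabs y m (x + stp y b) s.
Proof.
rewrite /rabs /= posx_nil -!andbA; congr (_ && _).
rewrite -(addn0 1%N) iotaDl all_map posx_cons; congr (_ && _).
by congr (_ && _); apply: eq_in_all => i _ /=; rewrite posx_cons.
Qed.

Definition Iv (m : nat) (x : int) := (1 <= x) && (x <= m%:Z - 1).

Fixpoint Aop (y m : nat) (phi : int -> {poly rat}) (L : nat) (x : int) : {poly rat} :=
  match L with
  | 0%N => if Iv m x then 0 else phi x
  | L'.+1 => if Iv m x then
      (2%:R : rat)^-1 *: (Aop y m phi L' (x + y%:Z) + 'X * Aop y m phi L' (x - 1))
      else 0
  end.

Definition phi0 (y m : nat) (x : int) : {poly rat} :=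
  if (m%:Z <= x) && (x <= m%:Z + y%:Z - 1) then 1 else 0.

Definition Gr (y m L : nat) (x : int) (j : nat) : rat :=
  \sum_(t : L.-tuple bool | rabs y m x t && (count negb t == j)) (2%:R : rat) ^- L.

Lemma Gr_coef y m L x j : (Aop y m (phi0 y m) L x)`_j = Gr y m L x j.
Proof.
elim: L x j => [|L IH] x j.
  rewrite /Gr big_mkcond /= (@sum_tuple0 (fun s => if rabs y m x s && (count negb s == j) then (2%:R:rat) ^- 0 else 0)) rabs_nil /= expr0 invr1 /phi0 /Iv.
  case: ifP => hI.
    have -> : (m%:Z <= x) = false by lia.
    by rewrite coef0.
  case: ifP => hr; last by rewrite coef0.
  rewrite coef1 /= eq_sym. by case: (0%N == j).
rewrite /Gr big_mkcond /= (@sum_tupleS L (fun s => if rabs y m x s && (count negb s == j) then (2%:R:rat) ^- L.+1 else 0)) big_bool /=.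
under eq_bigr do rewrite rabs_cons /stp.
under [X in _ = _ + X]eq_bigr do rewrite rabs_cons /stp.
rewrite /Iv; case: ifP => hI /=; last first.
  by rewrite coef0 !big1 ?addr0.
rewrite coefZ coefD coefXM !IH /Gr !(big_mkcond (fun t => _ && _)) /=.
rewrite mulrDr; congr (_ + _).
  rewrite mulr_sumr; apply: eq_bigr => t _.
  case: ifP => _ //=.
  by rewrite exprSr invfM mulrC.
case: j => [|j] /=.
  by rewrite mulr0 big1 // => t _; rewrite andbF.
rewrite mulr_sumr; apply: eq_bigr => t _; rewrite eqSS.
case: ifP => _ //=.
by rewrite exprSr invfM mulrC.
Qed.

Fixpoint Bop (y m : nat) (h : int -> {poly rat}) (n : nat) (x : int) : {poly rat} :=
  match n with
  | 0%N => if Iv m x then h x else 0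
  | n'.+1 => if Iv m x then
      (2%:R : rat)^-1 *: (Bop y m h n' (x + y%:Z) + 'X * Bop y m h n' (x - 1))
      else 0
  end.

Lemma Aop_scale y m c phi L x :
  Aop y m (fun z => c * phi z) L x = c * Aop y m phi L x.
Proof.
elim: L x => [|L IH] x /=; case: ifP => _; rewrite ?mulr0 //.
by rewrite !IH -scalerAr mulrDr mulrCA.
Qed.

Lemma opt_stop y m (h phi : int -> {poly rat}) :
  (forall x, Iv m x -> h x = (2%:R : rat)^-1 *: (h (x + y%:Z) + 'X * h (x - 1))) ->
  (forall x, 0 <= x -> x <= m%:Z + y%:Z - 1 -> ~~ Iv m x -> phi x = h x) ->
  forall n x, 0 <= x -> x <= m%:Z + y%:Z - 1 ->
  h x = \sum_(L < n.+1) Aop y m phi L x + Bop y m h n x.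
Proof.
move=> hh hphi n; elim: n => [|n IH] x hx0 hx1.
  rewrite big_ord1 /=; case: ifP => hI; first by rewrite add0r.
  by rewrite addr0 hphi // hI.
rewrite big_ord_recl /=; case: ifP => hI.
  rewrite add0r.
  under eq_bigr do rewrite add0n.
  rewrite -scaler_sumr big_split /= -mulr_sumr.
  rewrite -scalerDr hh //.
  move: hI; rewrite /Iv => hI.
  rewrite (IH (x + y%:Z)); try lia.
  rewrite (IH (x - 1)); try lia.
  congr (_ *: _); ring.
rewrite big1 ?addr0 ?hphi ?hI //.
Qed.

Lemma Bop_low y m h n x d :
  ((y.+1 * d)%N%:Z <= (y * n)%N%:Z + x + 1 - m%:Z) ->
  forall i, (i < d)%N -> (Bop y m h n x)`_i = 0.
Proof.
elim: n x d => [|n IH] x d hd i hi /=; case: ifP => hI; rewrite ?coef0 //.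
  move: hI; rewrite /Iv; lia.
rewrite coefZ coefD coefXM.
rewrite (IH (x + y%:Z) d) //; last by lia.
case: i hi => [|i] hi /=; first by rewrite addr0 mulr0.
rewrite (IH (x - 1) d.-1) ?addr0 ?mulr0 //; lia.
Qed.

Section Harm.
Variables (y m : nat).
Hypotheses (hy : (1 <= y)%N) (hm : (2 <= m)%N).

Definition w (k : int) : {poly rat} := u y k.
Definition Psi (k : int) : {poly rat} :=
  2%:R * w k - \sum_(i < y) 'X^(i.+1) * w (k - (i.+1)%:Z).
Definition Phi (k : int) : {poly rat} :=
  if 1 <= k then 'X^(y.-1) * Psi k
  else if 1 - y%:Z <= k then 'X^(absz (k + y%:Z - 1)%R) else 0.
Definition Def (f : int -> {poly rat}) k :=
  f k - 2%:R * f (k - 1) + 'X^y * f (k - y.+1%:Z).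

Lemma Def_w k : Def w k = ((k == 1)%:R)%:P.
Proof. by rewrite /Def /w -(u_rec y k) scaler_nat mulr_natl. Qed.

Lemma Def_Psi k : Def Psi k = 2%:R * Def w k - \sum_(i < y) 'X^(i.+1) * Def w (k - (i.+1)%:Z).
Proof.
have E : \sum_(i < y) 'X^(i.+1) * Def w (k - (i.+1)%:Z) =
   \sum_(i < y) 'X^(i.+1) * w (k - (i.+1)%:Z)
   - 2%:R * \sum_(i < y) 'X^(i.+1) * w (k - 1 - (i.+1)%:Z)
   + 'X^y * \sum_(i < y) 'X^(i.+1) * w (k - y.+1%:Z - (i.+1)%:Z).
  rewrite !mulr_sumr -sumrB -big_split /=; apply: eq_bigr => i _.
  rewrite /Def.
  have -> : k - (i.+1)%:Z - 1 = k - 1 - (i.+1)%:Z by ring.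
  have -> : k - (i.+1)%:Z - y.+1%:Z = k - y.+1%:Z - (i.+1)%:Z by ring.
  ring.
rewrite E /Def /Psi; ring.
Qed.

Lemma w_le0 k : k <= 0 -> w k = 0.
Proof. exact: u_le0. Qed.

Lemma sum_one (j : nat) : (j < y)%N ->
  \sum_(i < y) 'X^(i.+1) * (((Posz j.+2 - (i.+1)%:Z == 1)%:R)%:P : {poly rat}) = 'X^(j.+1).
Proof.
move=> hj; rewrite (bigD1 (Ordinal hj)) //= big1 ?addr0.
  have e : Posz j.+2 - j.+1%:Z = 1 by lia.
  by rewrite e eqxx mulr1.
move=> i hi.
have hij : (i : nat) <> j by move=> e; move: hi; rewrite -val_eqE /= e eqxx.
have -> : (Posz j.+2 - (i.+1)%:Z == 1) = false by lia.
by rewrite mulr0.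
Qed.

Lemma Psi_le0 k : k <= 0 -> Psi k = 0.
Proof.
move=> hk; rewrite /Psi w_le0 // mulr0 big1 ?subr0 // => i _.
by rewrite w_le0 ?mulr0 //; lia.
Qed.

Lemma Def_Phi k : 2 <= k -> Def Phi k = 0.
Proof.
move=> hk.
have P1 : Phi k = 'X^(y.-1) * Psi k by rewrite /Phi; have -> : 1 <= k by lia.
have P2 : Phi (k - 1) = 'X^(y.-1) * Psi (k - 1) by rewrite /Phi; have -> : 1 <= k - 1 by lia.
have D := Def_Psi k; rewrite Def_w in D.
have k1 : (k == 1) = false by lia.
rewrite k1 /= polyC0 mulr0 sub0r in D.
case: (leP (y.+2%:Z) k) => hky.
  have P3 : Phi (k - y.+1%:Z) = 'X^(y.-1) * Psi (k - y.+1%:Z).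
    by rewrite /Phi; have -> : 1 <= k - y.+1%:Z by lia.
  transitivity ('X^(y.-1) * Def Psi k); first by rewrite /Def P1 P2 P3; ring.
  rewrite D big1 ?oppr0 ?mulr0 //.
  move=> i _; rewrite Def_w.
  have -> : (k - (i.+1)%:Z == 1) = false by have := ltn_ord i; lia.
  by rewrite mulr0.
have [j [ej hj]] : exists j : nat, k = Posz j.+2 /\ (j < y)%N.
  exists (absz k).-2; split; lia.
have P3 : Phi (k - y.+1%:Z) = 'X^j.
  rewrite /Phi; have -> : 1 <= k - y.+1%:Z = false by lia.
  have -> : 1 - y%:Z <= k - y.+1%:Z by lia.
  by congr ('X^ _); lia.
have e2 : Psi k - 2%:R * Psi (k - 1) = - 'X^(j.+1).
  have := D; rewrite /Def (@Psi_le0 (k - y.+1%:Z)); last by lia.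
  rewrite mulr0 addr0 => ->.
  rewrite ej.
  have -> : \sum_(i < y) 'X^(i.+1) * Def w (Posz j.+2 - (i.+1)%:Z) =
     \sum_(i < y) 'X^(i.+1) * (((Posz j.+2 - (i.+1)%:Z == 1)%:R)%:P : {poly rat}).
    by apply: eq_bigr => i _; rewrite Def_w.
  by rewrite sum_one // mulr0 sub0r.
rewrite /Def P1 P2 P3.
have -> : 'X^y * 'X^j = 'X^(y.-1) * 'X^(j.+1) :> {poly rat}.
  by rewrite -!exprD; congr ('X^ _); lia.
transitivity ('X^(y.-1) * (Psi k - 2%:R * Psi (k - 1) + 'X^(j.+1))); first by ring.
by rewrite e2 addNr mulr0.
Qed.

Definition G (f : int -> {poly rat}) (x : int) : {poly rat} := 'X^(absz x) * f (m%:Z - x).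

Lemma G_harm f x : Iv m x -> Def f (m%:Z - x + 1) = 0 ->
  2%:R * G f x = G f (x + y%:Z) + 'X * G f (x - 1).
Proof.
rewrite /Iv => /andP[hx1 hx2].
have [n ->] : exists n : nat, x = Posz n.+1 by exists (absz x).-1; lia.
rewrite /Def /G.
have -> : Posz n.+1 + y%:Z = Posz (n.+1 + y) by rewrite PoszD.
have -> : Posz n.+1 - 1 = Posz n by lia.
have -> : m%:Z - Posz n.+1 + 1 - 1 = m%:Z - Posz n.+1 by ring.
have -> : m%:Z - Posz n.+1 + 1 - y.+1%:Z = m%:Z - Posz (n.+1 + y) by lia.
have -> : m%:Z - Posz n.+1 + 1 = m%:Z - Posz n by lia.
rewrite /absz exprD exprS => D.
transitivity (2%:R * ('X * 'X^n * f (m%:Z - Posz n.+1)) + 'X * 'X^n * (f (m%:Z - n%:Z) - 2%:R * f (m%:Z - n.+1%:Z) + 'X^y * f (m%:Z - (n.+1 + y)%:Z)) ).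
  by rewrite D mulr0 addr0.
ring.
Qed.

Definition H (x : int) : {poly rat} := w m%:Z * G Phi x - Phi m%:Z * G w x.

Lemma H_harm x : Iv m x -> H x = (2%:R : rat)^-1 *: (H (x + y%:Z) + 'X * H (x - 1)).
Proof.
move=> hI.
have hk : 2 <= m%:Z - x + 1 by move: hI; rewrite /Iv; lia.
have e1 := G_harm hI (Def_Phi hk).
have h1 : (m%:Z - x + 1 == 1) = false by lia.
have e2 : 2%:R * G w x = G w (x + y%:Z) + 'X * G w (x - 1).
  by apply: G_harm => //; rewrite Def_w h1 polyC0.
have E : 2%:R * H x = H (x + y%:Z) + 'X * H (x - 1).
  rewrite /H.
  transitivity (w m%:Z * (2%:R * G Phi x) - Phi m%:Z * (2%:R * G w x)); first by ring.
  rewrite e1 e2; ring.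
rewrite -E -mul_polyC mulrA -polyC_natr -polyCM mulVf ?mul1r //.
Qed.

Lemma H0 : H 0 = 0.
Proof. rewrite /H /G /= expr0 subr0; ring. Qed.

Lemma Hbd x : m%:Z <= x -> x <= m%:Z + y%:Z - 1 -> H x = w m%:Z * 'X^(m + y - 1).
Proof.
move=> h1 h2.
have [r [-> hr]] : exists r : nat, x = Posz (m + r) /\ (r < y)%N.
  exists (absz x - m)%N; split; lia.
rewrite /H /G /=.
have -> : m%:Z - Posz (m + r) = - r%:Z by rewrite PoszD; ring.
rewrite (@w_le0 (- r%:Z)) ?mulr0 ?subr0; last by lia.
rewrite /Phi.
have -> : (1 <= - r%:Z) = false by lia.
have -> : 1 - y%:Z <= - r%:Z by lia.
rewrite -exprD; have -> : (m + r + absz (- r%:Z + y%:Z - 1)%R)%N = (m + y - 1)%N by lia. by [].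
Qed.

Lemma Hm1 : H (m%:Z - 1) = 'X^(m + y - 2) * pr_num y m.
Proof.
rewrite /H /G.
have -> : m%:Z - (m%:Z - 1) = 1 by ring.
have -> : absz (m%:Z - 1) = m.-1 by lia.
have -> : Phi 1 = 'X^(y.-1) * 2%:R.
  rewrite /Phi /= /Psi /w u_1 mulr1 big1 ?subr0 // => i _.
  by rewrite u_le0 ?mulr0 //; lia.
have -> : Phi m%:Z = 'X^(y.-1) * (2%:R * w m%:Z - pr_num y m).
  by rewrite /Phi; have -> : 1 <= m%:Z by lia.
have -> : 'X^(m + y - 2) = 'X^(m.-1) * 'X^(y.-1) :> {poly rat}.
  by rewrite -exprD; congr ('X^ _); lia.
rewrite /w u_1; ring.
Qed.

End Harm.
Lemma Gr_big y m j L : (1 <= y)%N -> (2 * j + 2 <= L)%N -> Gr y m L (m%:Z - 1) j = 0.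
Proof.
move=> hy hL; rewrite /Gr big_pred0 // => t.
apply/negbTE/negP => /andP[hr /eqP hc].
have := right_absorbed_size hy hr; rewrite hc size_tuple; lia.
Qed.

Lemma rho_Gr y m j : rho y m j = \sum_(L < (2 * j + 2)%N) Gr y m L (m%:Z - 1) j.
Proof. by []. Qed.

Lemma sum_Gr y m j n : (1 <= y)%N -> (2 * j + 2 <= n)%N ->
  \sum_(L < n) Gr y m L (m%:Z - 1) j = rho y m j.
Proof.
move=> hy hn; rewrite rho_Gr.
rewrite (big_ord_widen n (fun L => Gr y m L (m%:Z - 1) j) hn).
rewrite [LHS](bigID (fun i : 'I_n => (i < 2 * j + 2)%N)) /=.
rewrite [X in _ + X = _]big1 ?addr0 // => i hi.
by apply: Gr_big => //; rewrite leqNgt.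
Qed.

Theorem mainTheorem2 (y m : nat) (hy : (1 <= y)%N) (hm : (2 <= m)%N) :
  forall N : nat,
    \sum_(i < N.+1) (u y m%:Z)`_i * pr_coef y m (N - i) = (pr_num y m)`_N.
Proof.
move=> N.
pose n := (2 * (N + m + y))%N.
pose C := u y m%:Z * 'X^(m + y - 1).
pose S := \sum_(L < n.+1) Aop y m (phi0 y m) L (m%:Z - 1).
have OS := @opt_stop y m (H y m) (fun z => C * phi0 y m z) (@H_harm y m hy hm) _ n (m%:Z - 1).
rewrite Hm1 // in OS.
have OS2 : 'X^(m + y - 2) * pr_num y m = 'X^(m + y - 2) * (u y m%:Z * ('X * S)) + Bop y m (H y m) n (m%:Z - 1).
  rewrite OS; last by lia.
  - congr (_ + _).
    under eq_bigr do rewrite Aop_scale.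
    rewrite -mulr_sumr /C -/S.
    have -> : 'X^(m + y - 1) = 'X^(m + y - 2) * 'X :> {poly rat}.
      by rewrite -exprSr; congr ('X^ _); lia.
    ring.
  - move=> x hx0 hx1 hI.
    rewrite /phi0.
    case: (leP x 0) => hx.
      have -> : x = 0 by lia.
      have -> : (m%:Z <= 0) = false by lia.
      by rewrite mulr0 H0.
    have hxm : m%:Z <= x by move: hI; rewrite /Iv; lia.
    by rewrite hxm hx1 mulr1 Hbd.
  - lia.
have := congr1 (fun p : {poly rat} => p`_(N + (m + y - 2))) OS2.
rewrite /= coefD !coefXnM.
have -> : (N + (m + y - 2) < m + y - 2)%N = false by lia.
rewrite addnK.
rewrite (@Bop_low y m (H y m) n (m%:Z - 1) (N + m + y - 1)%N); last by lia.
  2: by nia.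
rewrite addr0 => ->.
rewrite coefM; apply: eq_bigr => i _.
congr (_ * _).
rewrite coefXM.
have hi := ltn_ord i.
case hk: (N - i)%N => [|j] //=.
rewrite /S coef_sum.
under eq_bigr do rewrite Gr_coef.
symmetry; apply: sum_Gr => //; lia.
Qed.
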